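(* Let $F$ be a global function field with full constant field $k=\mathbb{F}_q$, let $x\in F$ be transcendental over $k$ with $n=[F:k(x)]$ and $\gcd(n,q)=1$, and let $S=\{P_1,\dots,P_{|S|}\}$ be a finite set of places of $F$ containing all infinite places of $F/k(x)$. Let $M_S\in\mathbb{Z}^{(|S|-1)\times|S|}$ be an integer matrix whose rows form an LLL-reduced basis of the $S$-unit valuation lattice $\Lambda_S'$ (this is the output of the paper's algorithm SValMat on input $S$). Then \[ \|M_S\|_\infty:=\max_{i,j}|(M_S)_{ij}| \le 2^{(|S|-1)(|S|-2)/4}\,R_S'. \]
   Context: The infinite places of $F/k(x)$ are the poles of $x$. For a finite set $S$ of places containing all infinite places, $O_S^\times$ denotes the group of $S$-units of $F$ (elements whose divisor is supported on $S$). With a fixed ordering $P_1,\dots,P_{|S|}$ of $S$, let $\phi_S:F^\times\to\mathbb{Z}^{|S|}$, $\alpha\mapsto(-v_{P_1}(\alpha),\dots,-v_{P_{|S|}}(\alpha))$, where $v_P$ is the normalized discrete valuation at $P$. The $S$-unit valuation lattice is $\Lambda_S'=\phi_S(O_S^\times)$, a lattice of rank $|S|-1$ in $\mathbb{Z}^{|S|}$, and $R_S'=\det\Lambda_S'$ is its determinant (covolume). LLL-reduced is meant in the sense of Lenstra–Lenstra–Lovász. *)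

(* Defs.v *)
From HB Require Import structures.
From mathcomp Require Import all_boot all_order all_algebra.
From mathcomp Require Import reals exp.
Set Implicit Arguments. Unset Strict Implicit. Unset Printing Implicit Defensive.
Import Order.TTheory GRing.Theory Num.Theory.
Local Open Scope ring_scope.

Section FunctionField.
Variable F : fieldType.

Definition is_subfield (k : {pred F}) : Prop :=
  [/\ 0 \in k, 1 \in k,
      forall a b, a \in k -> b \in k -> a - b \in k,
      forall a b, a \in k -> b \in k -> a * b \in k
    & forall a, a \in k -> a^-1 \in k].

Definition has_card (k : {pred F}) (q : nat) : Prop :=
  exists s : seq F, [/\ uniq s, size s = q & k =i s].

Definition poly_over (k : {pred F}) (p : {poly F}) : Prop :=
  forall i, p`_i \in k.

Definition algebraic_over (k : {pred F}) (a : F) : Prop :=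
  exists p : {poly F}, [/\ poly_over k p, p != 0 & root p a].

Definition full_constant_field (k : {pred F}) : Prop :=
  forall a, algebraic_over k a -> a \in k.

Definition transcendental_over (k : {pred F}) (x : F) : Prop :=
  ~ algebraic_over k x.

Definition in_kx (k : {pred F}) (x y : F) : Prop :=
  exists p r : {poly F},
    [/\ poly_over k p, poly_over k r, r.[x] != 0 & y = p.[x] / r.[x]].

Definition ext_degree_kx (k : {pred F}) (x : F) (n : nat) : Prop :=
  exists b : 'I_n -> F,
    (forall y, exists c : 'I_n -> F,
        (forall i, in_kx k x (c i)) /\ y = \sum_(i < n) c i * b i) /\
    (forall c : 'I_n -> F, (forall i, in_kx k x (c i)) ->
        \sum_(i < n) c i * b i = 0 -> forall i, c i = 0).

(* A place P of F/k, represented by its normalized discrete valuation v_P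
   (restricted to F^x; by convention v 0 = 0, so that places and their
   valuations correspond bijectively). *)
Definition is_place (k : {pred F}) (v : F -> int) : Prop :=
  [/\ v 0 = 0,
      forall a b, a != 0 -> b != 0 -> v (a * b) = v a + v b,
      forall a b, a != 0 -> b != 0 -> a + b != 0 ->
        Num.min (v a) (v b) <= v (a + b),
      exists t, t != 0 /\ v t = 1
    & forall c, c \in k -> c != 0 -> v c = 0].

Definition infinite_place (k : {pred F}) (x : F) (v : F -> int) : Prop :=
  is_place k v /\ v x < 0.

Definition S_unit (k : {pred F}) (s : nat) (S : 'I_s -> F -> int) (a : F) : Prop :=
  a != 0 /\ forall v, is_place k v -> (forall i, v <> S i) -> v a = 0.

Definition phiS (s : nat) (S : 'I_s -> F -> int) (a : F) : 'rV[int]_s :=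
  \row_(i < s) - S i a.

Definition S_val_lattice (k : {pred F}) (s : nat) (S : 'I_s -> F -> int)
  (w : 'rV[int]_s) : Prop :=
  exists a, S_unit k S a /\ w = phiS S a.
End FunctionField.

Definition is_lattice_basis (r m : nat) (L : 'rV[int]_m -> Prop)
  (B : 'M[int]_(r, m)) : Prop :=
  [/\ forall i, L (row i B),
      forall w, L w -> exists c : 'rV[int]_r, w = c *m B
    & forall c : 'rV[int]_r, c *m B = 0 -> c = 0].

Section LLL.
Variable R : realType.

Definition dotr (m : nat) (u v : 'rV[R]_m) : R := (u *m v^T) 0 0.

Definition gs_step (m : nat) (gs : seq 'rV[R]_m) (b : 'rV[R]_m) :=
  rcons gs (b - \sum_(g <- gs) (dotr b g / dotr g g) *: g).
Definition gram_schmidt (m : nat) (bs : seq 'rV[R]_m) : seq 'rV[R]_m :=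
  foldl (@gs_step m) [::] bs.

Definition rows_real (r m : nat) (B : 'M[int]_(r, m)) : seq 'rV[R]_m :=
  [seq row i (map_mx (fun z : int => z%:~R) B) | i <- enum 'I_r].

Definition LLL_reduced (r m : nat) (B : 'M[int]_(r, m)) : Prop :=
  let bs := rows_real B in
  let gs := gram_schmidt bs in
  let b i := nth 0 bs i in
  let g i := nth 0 gs i in
  let mu i j := dotr (b i) (g j) / dotr (g j) (g j) in
  (forall i j : nat, (j < i < r)%N -> `|mu i j| <= 1 / 2) /\
  (forall i : nat, (0 < i < r)%N ->
     (3 / 4 - (mu i i.-1) ^+ 2) * dotr (g i.-1) (g i.-1) <= dotr (g i) (g i)).

Definition lattice_det (r m : nat) (B : 'M[int]_(r, m)) : R :=
  let Br := map_mx (fun z : int => z%:~R : R) B in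
  Num.sqrt (\det (Br *m Br^T)).
End LLL.

Definition mx_inf_norm (r m : nat) (B : 'M[int]_(r, m)) : int :=
  \big[Num.max/0]_(i < r) \big[Num.max/0]_(j < m) `|B i j|.

(* Main.v *)
Require Import Defs.
From HB Require Import structures.
From mathcomp Require Import all_boot all_order all_algebra.
From mathcomp Require Import reals exp.
Import Order.TTheory GRing.Theory Num.Theory.
Local Open Scope ring_scope.
From mathcomp Require Import lra.

Section GS.
Variable R : realType.
Variable m : nat.
Implicit Types (u v w b : 'rV[R]_m) (bs : seq 'rV[R]_m).

Lemma dotrE u v : dotr u v = \sum_k u 0 k * v 0 k.
Proof. by rewrite /dotr mxE; apply: eq_bigr => k _; rewrite mxE. Qed.

Lemma dotrC u v : dotr u v = dotr v u.
Proof. by rewrite !dotrE; apply: eq_bigr => k _; rewrite mulrC. Qed.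

Lemma dotrDl u v w : dotr (u + v) w = dotr u w + dotr v w.
Proof. by rewrite !dotrE -big_split; apply: eq_bigr => k _; rewrite mxE mulrDl. Qed.

Lemma dotrNl u w : dotr (- u) w = - dotr u w.
Proof. by rewrite !dotrE -sumrN; apply: eq_bigr => k _; rewrite mxE mulNr. Qed.

Lemma dotrBl u v w : dotr (u - v) w = dotr u w - dotr v w.
Proof. by rewrite dotrDl dotrNl. Qed.

Lemma dotrZl a u w : dotr (a *: u) w = a * dotr u w.
Proof. by rewrite !dotrE mulr_sumr; apply: eq_bigr => k _; rewrite mxE mulrA. Qed.

Lemma dotr0l w : dotr 0 w = 0.
Proof. by rewrite dotrE big1 // => k _; rewrite mxE mul0r. Qed.

Lemma dotr_suml (I : Type) (r : seq I) (P : pred I) (F : I -> 'rV[R]_m) w :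
  dotr (\sum_(i <- r | P i) F i) w = \sum_(i <- r | P i) dotr (F i) w.
Proof.
elim/big_rec2: _ => [|i y1 y2 _ <-]; first exact: dotr0l.
by rewrite dotrDl.
Qed.

Lemma dotr_ge0 u : 0 <= dotr u u.
Proof. by rewrite dotrE; apply: sumr_ge0 => k _; rewrite -expr2 sqr_ge0. Qed.

Lemma dotr_eq0 u : dotr u u = 0 -> u = 0.
Proof.
rewrite dotrE => /eqP; rewrite psumr_eq0 => [H|k _]; last by rewrite -expr2 sqr_ge0.
apply/rowP => k; rewrite mxE.
by move/allP: H => /(_ k (mem_index_enum _)) /implyP /(_ isT); rewrite mulf_eq0 orbb => /eqP.
Qed.

Definition gsc (gs : seq 'rV[R]_m) b :=
  b - \sum_(g <- gs) (dotr b g / dotr g g) *: g.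

Lemma gs_rcons bs b : gram_schmidt (rcons bs b) = rcons (gram_schmidt bs) (gsc (gram_schmidt bs) b).
Proof. by rewrite /gram_schmidt foldl_rcons. Qed.

Lemma size_gs bs : size (gram_schmidt bs) = size bs.
Proof.
elim/last_ind: bs => [//|bs b IH]; by rewrite gs_rcons !size_rcons IH.
Qed.

Lemma gs_orth bs i j : (i < size bs)%N -> (j < size bs)%N -> i != j ->
  dotr (nth 0 (gram_schmidt bs) i) (nth 0 (gram_schmidt bs) j) = 0.
Proof.
elim/last_ind: bs i j => [//|bs b IH] i j.
set gs := gram_schmidt bs.
have key : forall j, (j < size bs)%N -> dotr (gsc gs b) (nth 0 gs j) = 0.
  move=> {}j lt_j; rewrite /gsc dotrBl dotr_suml (big_nth 0) big_mkord.
  have lt_j' : (j < size gs)%N by rewrite size_gs.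
  rewrite (bigD1 (Ordinal lt_j')) //= big1 ?addr0.
    rewrite dotrZl; have [N0|N0] := eqVneq (dotr (nth 0 gs j) (nth 0 gs j)) 0.
      by rewrite (dotr_eq0 _ N0) dotrC dotr0l !mul0r subr0.
    by rewrite mulfVK // subrr.
  move=> k /eqP neq; rewrite dotrZl (IH k j) ?mulr0 //.
  - by apply: leq_trans (ltn_ord k) _; rewrite /gs size_gs.
  - by apply/eqP => E; apply: neq; apply: val_inj.
rewrite gs_rcons !size_rcons !nth_rcons size_gs !ltnS => ii jj.
move: ii jj; rewrite [(i <= _)%N]leq_eqVlt [(j <= _)%N]leq_eqVlt.
case/orP=> [/eqP ->|li]; case/orP=> [/eqP ->|lj]; rewrite ?eqxx ?ltnn //.
- by move=> _; rewrite (ltn_eqF lj) lj; apply: key.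
- by move=> _; rewrite (ltn_eqF li) li dotrC; apply: key.
- by rewrite li lj; apply: IH.
Qed.

Lemma gs_nth bs i : (i < size bs)%N ->
  nth 0 bs i = nth 0 (gram_schmidt bs) i +
    \sum_(j < i) (dotr (nth 0 bs i) (nth 0 (gram_schmidt bs) j) /
                  dotr (nth 0 (gram_schmidt bs) j) (nth 0 (gram_schmidt bs) j))
                 *: nth 0 (gram_schmidt bs) j.
Proof.
elim/last_ind: bs i => [//|bs b IH] i.
rewrite size_rcons ltnS leq_eqVlt gs_rcons; case/orP=> [/eqP ->|li].
  rewrite !nth_rcons size_gs ltnn eqxx /gsc.
  rewrite (big_nth 0) big_mkord size_gs.
  under [X in _ = _ + X]eq_bigr => j _ do rewrite !nth_rcons size_gs ltn_ord.
  by rewrite subrK.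
rewrite !nth_rcons size_gs li {1}(IH _ li); congr (_ + _).
by apply: eq_bigr => j _; rewrite !nth_rcons size_gs (ltn_trans (ltn_ord j) li).
Qed.

End GS.

Section Main.
Variable R : realType.
Variables r m : nat.
Variable M : 'M[int]_(r, m).

Let B : 'M[R]_(r, m) := map_mx (fun z : int => z%:~R) M.
Let bs := rows_real R M.
Let gs := gram_schmidt bs.
Let b i := nth 0 bs i.
Let g i := nth 0 gs i.
Let N i := dotr (g i) (g i).
Let mu i j := dotr (b i) (g j) / N j.

Lemma size_bs : size bs = r.
Proof. by rewrite /bs /rows_real size_map size_enum_ord. Qed.

Lemma size_gs' : size gs = r.
Proof. by rewrite /gs size_gs size_bs. Qed.

Lemma bE (i : 'I_r) : b i = row i B.
Proof.
rewrite /b /bs /rows_real (nth_map i) ?size_enum_ord //.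
by rewrite nth_ord_enum.
Qed.

Let Gm : 'M[R]_(r, m) := \matrix_(i, k) (g i) 0 k.
Let L : 'M[R]_r := \matrix_(i, j) (if (j < i)%N then mu i j else (j == i)%:R).

Lemma rowGm (i : 'I_r) : row i Gm = g i.
Proof. by apply/rowP => k; rewrite !mxE. Qed.

Lemma B_eq : B = L *m Gm.
Proof.
apply/row_matrixP => i; rewrite row_mul mulmx_sum_row -bE.
rewrite /b /g /mu /N gs_nth ?size_bs // -/gs.
rewrite (big_ord_widen r (fun j => (dotr (nth 0 bs i) (nth 0 gs j) /
                  dotr (nth 0 gs j) (nth 0 gs j)) *: nth 0 gs j)) ?(ltnW (ltn_ord i)) //.
rewrite big_mkcond /=.
under [RHS]eq_bigr => j _ do rewrite rowGm !mxE.
rewrite [RHS](eq_bigr (fun j : 'I_r => (if (j < i)%N then (mu i j) *: g j else 0) +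
    (if j == i then g j else 0))); last first.
  move=> j _; case: ltnP => ji.
    by rewrite -val_eqE /= (ltn_eqF ji) addr0.
  by rewrite add0r; case: eqP => _; rewrite ?scale1r ?scale0r.
rewrite big_split /= -big_mkcond -[X in _ = _ + X]big_mkcond big_pred1_eq.
by rewrite addrC.
Qed.


Let G := Gm *m Gm^T.

Lemma G_entry (i j : 'I_r) : G i j = dotr (g i) (g j).
Proof. by rewrite mxE dotrE; apply: eq_bigr => k _; rewrite !mxE. Qed.

Lemma G_offdiag (i j : 'I_r) : i != j -> G i j = 0.
Proof.
move=> nij; rewrite G_entry /g /gs gs_orth ?size_bs //.
Qed.

Lemma BBt : B *m B^T = L *m G *m L^T.
Proof. by rewrite B_eq trmx_mul /G !mulmxA. Qed.

Lemma detL : \det L = 1.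
Proof.
rewrite det_trig; last first.
  apply/is_trig_mxP => i j lij; rewrite mxE ltnNge (ltnW lij) /=.
  by rewrite -val_eqE /= (gtn_eqF lij).
by apply: big1 => i _; rewrite mxE ltnn eqxx.
Qed.

Lemma det_BBt : \det (B *m B^T) = \prod_(i < r) N i.
Proof.
rewrite BBt !det_mulmx det_tr detL mul1r mulr1 det_trig; last first.
  by apply/is_trig_mxP => i j lij; apply: G_offdiag; rewrite -val_eqE /= (ltn_eqF lij).
by apply: eq_bigr => i _; rewrite G_entry.
Qed.

Lemma nb_eq (i : 'I_r) : dotr (b i) (b i) = \sum_(k < r) (L i k) ^+ 2 * N k.
Proof.
have -> : dotr (b i) (b i) = (B *m B^T) i i.
  by rewrite bE dotrE mxE; apply: eq_bigr => k _; rewrite !mxE.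
rewrite BBt mxE; apply: eq_bigr => k _.
rewrite mxE (bigD1 k) //= big1 ?addr0; last first.
  by move=> j njk; rewrite G_offdiag ?mulr0.
by rewrite G_entry expr2 [L^T k i]mxE [L i k]mxE mulrAC.
Qed.

Lemma N_ge0 i : 0 <= N i.
Proof. exact: dotr_ge0. Qed.

Hypothesis HL : LLL_reduced R M.

Lemma mu_bound i j : (j < i < r)%N -> mu i j ^+ 2 <= 1 / 4.
Proof.
move=> hij; case: HL => H1 _.
have h : `|mu i j| <= 1 / 2 := H1 i j hij.
rewrite -real_normK ?num_real //.
have h0 := normr_ge0 (mu i j).
nra.
Qed.

Lemma lovasz i : (0 < i < r)%N -> N i.-1 <= 2 * N i.
Proof.
move=> hi; case: HL => _ H2.
have h : (3 / 4 - mu i i.-1 ^+ 2) * N i.-1 <= N i := H2 i hi.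
have hm : mu i i.-1 ^+ 2 <= 1 / 4.
  apply: mu_bound; case/andP: hi => h0 h1; rewrite h1 andbT.
  by rewrite prednK.
have := N_ge0 i.-1; nra.
Qed.

Lemma Qbound i : (i < r)%N -> \sum_(k < i) N k + 2 * N i <= 2 ^+ i.+1 * N i.
Proof.
elim: i => [|i IH] hi.
  by rewrite big_ord0 add0r expr1.
have hi' : (i < r)%N by apply: ltn_trans hi.
have IHi := IH hi'.
have lv : N i <= 2 * N i.+1 by apply: (lovasz i.+1); rewrite hi.
have P1 : 1 <= (2 : R) ^+ i.+1 by rewrite exprn_ege1 // ler1n.
have := mulr_ge0 (x := 2 ^+ i.+1 - 1) (y := 2 * N i.+1 - N i).
rewrite subr_ge0 P1 subr_ge0 lv => /(_ isT isT) hp.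
rewrite big_ord_recr /= exprS.
have := N_ge0 i; have := N_ge0 i.+1.
nra.
Qed.

Lemma nb_bound (i : 'I_r) : dotr (b i) (b i) <= 2 ^+ i * N i.
Proof.
rewrite nb_eq.
apply: (@le_trans _ _ (\sum_(k < r) ((if (k < i)%N then N k / 4 else 0) +
                                     (if k == i then N k else 0)))).
  apply: ler_sum => k _; rewrite mxE.
  case: ltnP => ki.
    rewrite -val_eqE /= (ltn_eqF ki) addr0.
    have hm : mu i k ^+ 2 <= 1 / 4 by apply: mu_bound; rewrite ki ltn_ord.
    have := N_ge0 k; nra.
  rewrite add0r -val_eqE /=; case: eqP => _.
    by rewrite expr1n mul1r.
  by rewrite expr0n /= mul0r.
rewrite big_split /= -big_mkcond -[X in _ + X <= _]big_mkcond big_pred1_eq.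
rewrite -(big_ord_widen r (fun k => N k / 4)) ?(ltnW (ltn_ord i)) //.
rewrite -mulr_suml.
have Q := @Qbound i (ltn_ord i).
have P1 : 1 <= (2 : R) ^+ i by rewrite exprn_ege1 // ler1n.
have := N_ge0 i; move: Q; rewrite exprS; nra.
Qed.

Let nb k := dotr (b k) (b k).

Lemma nbE (k : 'I_r) : nb k = \sum_(l < m) ((M k l)%:~R) ^+ 2.
Proof. by rewrite /nb bE dotrE; apply: eq_bigr => l _; rewrite !mxE expr2. Qed.

Lemma int_sqr_ge1 (z : int) : z != 0 -> 1 <= ((z%:~R : R) ^+ 2).
Proof.
move=> nz; rewrite -rmorphXn /= ler1z.
have h1 : 1 <= `|z| by rewrite -gtz0_ge1 normr_gt0.
rewrite -[z ^+ 2]ger0_norm ?sqr_ge0 // normrX expr2.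
by rewrite -(mulr1 1) ler_pM.
Qed.

Hypothesis Hnz : forall k, row k M != 0.

Lemma nb_ge1 (k : 'I_r) : 1 <= nb k.
Proof.
have [l Hl] : exists l, M k l != 0.
  apply/existsP; apply: contraR (Hnz k) => /existsPn H.
  by apply/eqP/rowP => l; rewrite !mxE; apply/eqP; have := H l; rewrite negbK.
rewrite nbE (bigD1 l) //=.
have := int_sqr_ge1 _ Hl.
have : 0 <= \sum_(i < m | i != l) ((M k i)%:~R : R) ^+ 2.
  by apply: sumr_ge0 => i _; rewrite sqr_ge0.
lra.
Qed.

Lemma prod_ge1 (I : finType) (P : pred I) (F : I -> R) :
  (forall i, 1 <= F i) -> 1 <= \prod_(i | P i) F i.
Proof.
move=> H; apply: (big_ind (fun x => 1 <= x)) => // x y hx hy.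
nra.
Qed.

Lemma entry_bound (i : 'I_r) (j : 'I_m) :
  ((M i j)%:~R : R) ^+ 2 <= 2 ^+ 'C(r, 2) * \det (B *m B^T).
Proof.
apply: (@le_trans _ _ (nb i)).
  rewrite nbE (bigD1 j) //= lerDl.
  by apply: sumr_ge0 => l _; rewrite sqr_ge0.
apply: (@le_trans _ _ (\prod_(k < r) nb k)).
  rewrite (bigD1 i) //=.
  have := @prod_ge1 _ (predC1 i) (fun k : 'I_r => nb k) nb_ge1.
  have := nb_ge1 i.
  nra.
apply: (@le_trans _ _ (\prod_(k < r) (2 ^+ k * N k))).
  apply: ler_prod => k _.
  by rewrite (le_trans _ (nb_ge1 k)) //= nb_bound.
rewrite big_split /= prodrXr det_BBt.
by rewrite -(big_mkord xpredT (fun k => k)) bin2_sum.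
Qed.

End Main.



Lemma bigmax_int_le (R : realType) (X : R) (n : nat) (F : 'I_n -> int) :
  0 <= X -> (forall i, (F i)%:~R <= X) ->
  ((\big[Num.max/0]_(i < n) F i)%:~R <= X).
Proof.
move=> X0 H; apply: (big_ind (fun z : int => (z%:~R : R) <= X)) => //.
move=> x y hx hy; rewrite maxElt; by case: ifP.
Qed.

Lemma C2R (R : realType) r : ('C(r, 2))%:R * 2 = r%:R * (r%:R - 1) :> R.
Proof.
elim: r => [|r IH]; first by rewrite bin0n mul0r mul0r.
rewrite binS bin1 natrD mulrDl IH -!natr1; lra.
Qed.

Theorem proposition2p2
  (R : realType) (F : fieldType) (k : {pred F}) (q : nat) (x : F) (n : nat)
  (s : nat) (S : 'I_s -> F -> int) (M : 'M[int]_(s.-1, s)) :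
  is_subfield k -> has_card k q -> full_constant_field k ->
  transcendental_over k x -> ext_degree_kx k x n -> coprime n q ->
  (forall i, is_place k (S i)) -> injective S ->
  (forall v, infinite_place k x v -> exists i, v = S i) ->
  is_lattice_basis (S_val_lattice k S) M ->
  LLL_reduced R M ->
  ((mx_inf_norm M)%:~R : R)
    <= powR 2 (((s%:R - 1) * (s%:R - 2)) / 4) * lattice_det R M.
Proof.
move=> _ _ _ _ _ _ _ _ _ [_ _ Hind] HL.
have Hnz : forall i, row i M != 0.
  move=> i; apply/eqP => H0.
  have := Hind (delta_mx 0 i); rewrite -rowE H0 => /(_ erefl) /matrixP /(_ 0 i).
  by rewrite !mxE !eqxx.
have X0 : 0 <= powR 2 (((s%:R - 1) * (s%:R - 2)) / 4) * lattice_det R M.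
  by rewrite mulr_ge0 ?powR_ge0 // /lattice_det sqrtr_ge0.
apply: bigmax_int_le => // i.
apply: bigmax_int_le => // j.
have Hs : s = (s.-1).+1.
  have := ltn_ord i; move: (nat_of_ord i) => i'; by case: (s).
have E := entry_bound _ _ _ _ HL Hnz i j.
rewrite intr_norm -sqrtr_sqr /lattice_det.
have Ha : ((s%:R - 1) * (s%:R - 2) / 4 : R) = ('C(s.-1, 2))%:R * 2^-1.
  have sR : (s%:R : R) = (s.-1)%:R + 1 by rewrite {1}Hs -natr1.
  have := C2R R s.-1; rewrite sR; nra.
have Hp : powR (2 : R) ((s%:R - 1) * (s%:R - 2) / 4) = Num.sqrt (2 ^+ 'C(s.-1, 2)).
  by rewrite Ha powRrM powR_mulrn // powR12_sqrt // exprn_ge0.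
rewrite Hp -sqrtrM ?exprn_ge0 // ler_sqrt //.
exact: le_trans (sqr_ge0 _) E.
Qed.
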